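(* Quantitative variability may fail for multifold edges under monotonic semantics: there exist a gradual semantics $\sigma$ satisfying monotonicity on all acyclic QBAFs, an acyclic QBAF $\mathcal{Q}=\langle\mathcal{A},\mathcal{R}^-,\mathcal{R}^+,\tau\rangle$, an argument $\alpha\in\mathcal{A}$, and an edge $r=(\beta,\gamma)\in\mathcal{R}$ multifold w.r.t. $\alpha$ with $\alpha\neq\beta$ and $\mathcal{R}(\beta)=\{r\}$, and some $\delta\in[0,1]$, such that either $\delta<\tau(\beta)$ and $|\phi_\delta|>|\phi^\alpha_\sigma(r)|$, or $\delta>\tau(\beta)$ and $|\phi_\delta|<|\phi^\alpha_\sigma(r)|$; here $\phi_\delta$ denotes $\phi^\alpha_\sigma(r)$ computed in $\langle\mathcal{A},\mathcal{R}^-,\mathcal{R}^+,\tau_\delta\rangle$ with $\tau_\delta(\beta)=\delta$ and $\tau_\delta=\tau$ on $\mathcal{A}\setminus\{\beta\}$.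
   Context: A QBAF is a quadruple $\mathcal{Q}=\langle\mathcal{A},\mathcal{R}^-,\mathcal{R}^+,\tau\rangle$ with $\mathcal{A}$ a finite set of arguments, $\mathcal{R}^-,\mathcal{R}^+\subseteq\mathcal{A}\times\mathcal{A}$ disjoint attack and support relations, and $\tau:\mathcal{A}\to[0,1]$ base scores; $\mathcal{R}=\mathcal{R}^-\cup\mathcal{R}^+$, $\mathcal{R}(\beta)=\{(\beta,\gamma)\in\mathcal{R}\}$; acyclic means $(\mathcal{A},\mathcal{R})$ has no directed cycle. A gradual semantics $\sigma$ assigns strengths in $[0,1]$ to arguments of QBAFs. For $\mathcal{S}\subseteq\mathcal{R}$, $\sigma_{\mathcal{S}}(\alpha)$ is the strength of $\alpha$ in $\langle\mathcal{A},\mathcal{R}^-\cap\mathcal{S},\mathcal{R}^+\cap\mathcal{S},\tau\rangle$; for $\tau':\mathcal{A}\to[0,1]$, $\sigma_{\tau'}(\alpha)$ is the strength of $\alpha$ in $\langle\mathcal{A},\mathcal{R}^-,\mathcal{R}^+,\tau'\rangle$. The RAE is $\phi^\alpha_\sigma(r)=\sum_{\mathcal{S}\subseteq\mathcal{R}\setminus\{r\}}\frac{(|\mathcal{R}|-|\mathcal{S}|-1)!|\mathcal{S}|!}{|\mathcal{R}|!}[\sigma_{\mathcal{S}\cup\{r\}}(\alpha)-\sigma_{\mathcal{S}}(\alpha)]$. $\sigma$ satisfies monotonicity on a class of QBAFs if for every QBAF in the class, every $\alpha,\beta\in\mathcal{A}$ with $\alpha\neq\beta$ and $\mathcal{R}(\beta)=\{(\beta,\alpha)\}$,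 and every $\tau':\mathcal{A}\to[0,1]$: (1) if $(\beta,\alpha)\in\mathcal{R}^-$ then $\sigma(\alpha)\le\sigma_{\mathcal{R}\setminus\{(\beta,\alpha)\}}(\alpha)$; (2) if $(\beta,\alpha)\in\mathcal{R}^+$ then $\sigma(\alpha)\ge\sigma_{\mathcal{R}\setminus\{(\beta,\alpha)\}}(\alpha)$; (3) if $(\beta,\alpha)\in\mathcal{R}^-$, $\tau(\beta)\le\tau'(\beta)$ and $\tau'=\tau$ on $\mathcal{A}\setminus\{\beta\}$, then $\sigma(\alpha)\ge\sigma_{\tau'}(\alpha)$; (4) if $(\beta,\alpha)\in\mathcal{R}^+$, $\tau(\beta)\le\tau'(\beta)$ and $\tau'=\tau$ on $\mathcal{A}\setminus\{\beta\}$, then $\sigma(\alpha)\le\sigma_{\tau'}(\alpha)$. A path from $\gamma$ to $\alpha$ is a finite sequence of edges $(x_0,x_1),\dots,(x_{k-1},x_k)\in\mathcal{R}$ with $x_0=\gamma$, $x_k=\alpha$. An edge $(\beta,\gamma)\in\mathcal{R}$ with $\beta\neq\alpha$ is multifold w.r.t. $\alpha$ if $\gamma\neq\alpha$ and there is more than one path from $\gamma$ to $\alpha$ in $\mathcal{Q}$. *)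

(* Defs.v *)
From HB Require Import structures.
From mathcomp Require Import all_boot all_order all_algebra.
From mathcomp Require Import reals.
Set Implicit Arguments. Unset Strict Implicit. Unset Printing Implicit Defensive.
Import Order.TTheory GRing.Theory Num.Theory.
Local Open Scope ring_scope.

Record qbaf (R : Type) (T : finType) := QBAF {
  att : rel T;
  sup : rel T;
  bs  : T -> R
}.

Section QBAF.
Variable R : realType.
Variable T : finType.
Implicit Types (Q : qbaf R T).

Definition valid_qbaf Q : Prop :=
  (forall x y, ~~ (att Q x y && sup Q x y)) /\
  (forall x, 0 <= bs Q x <= 1).

Definition edge Q : rel T := fun x y => att Q x y || sup Q x y.
Definition edges Q : {set T * T} := [set e | edge Q e.1 e.2].

Definition acyclic Q : Prop := forall x y, edge Q x y -> ~~ connect (edge Q) y x.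

Definition only_edge Q (b a : T) : Prop := forall c, edge Q b c <-> c = a.

Definition restrict Q (S : {set T * T}) : qbaf R T :=
  QBAF (fun x y => att Q x y && ((x, y) \in S))
       (fun x y => sup Q x y && ((x, y) \in S)) (bs Q).

Definition with_bs Q (t : T -> R) : qbaf R T := QBAF (att Q) (sup Q) t.

Definition update_bs Q (b : T) (d : R) : qbaf R T :=
  with_bs Q (fun x => if x == b then d else bs Q x).

(* a path from g to a: vertex sequence g = x0, x1, ..., xk = a with each
   (x_i, x_{i+1}) in R (for g <> a such paths are nonempty and correspond
   bijectively to edge sequences) *)
Definition is_path_to Q (g a : T) (p : seq T) : bool :=
  path (edge Q) g p && (last g p == a).

Definition multifold Q (a : T) (r : T * T) : Prop :=
  edge Q r.1 r.2 /\ r.1 != a /\ r.2 != a /\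
  exists p1 p2, [/\ is_path_to Q r.2 a p1, is_path_to Q r.2 a p2 & p1 != p2].

End QBAF.

Definition semantics (R : realType) :=
  forall T : finType, qbaf R T -> T -> R.

Definition gradual (R : realType) (sigma : semantics R) : Prop :=
  forall (T : finType) (Q : qbaf R T), valid_qbaf Q ->
    forall x, 0 <= sigma T Q x <= 1.

Definition monotonic_acyclic (R : realType) (sigma : semantics R) : Prop :=
  forall (T : finType) (Q : qbaf R T), valid_qbaf Q -> acyclic Q ->
  forall (a b : T), a != b -> only_edge Q b a ->
  forall tau' : T -> R, (forall x, 0 <= tau' x <= 1) ->
  [/\ (att Q b a -> sigma T Q a <= sigma T (restrict Q (edges Q :\ (b, a))) a),
      (sup Q b a -> sigma T Q a >= sigma T (restrict Q (edges Q :\ (b, a))) a),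
      (att Q b a -> bs Q b <= tau' b -> (forall x, x != b -> tau' x = bs Q x) ->
          sigma T Q a >= sigma T (with_bs Q tau') a) &
      (sup Q b a -> bs Q b <= tau' b -> (forall x, x != b -> tau' x = bs Q x) ->
          sigma T Q a <= sigma T (with_bs Q tau') a)].

Definition RAE (R : realType) (sigma : semantics R) (T : finType)
    (Q : qbaf R T) (a : T) (r : T * T) : R :=
  let n := #|edges Q| in
  \sum_(S : {set T * T} | S \subset (edges Q :\ r))
     ((((n - #|S| - 1)`! * #|S|`!)%:R / (n`!)%:R) *
      (sigma T (restrict Q (r |: S)) a - sigma T (restrict Q S) a)).

(* Main.v *)
Require Import Defs.
From HB Require Import structures.
From mathcomp Require Import all_boot all_order all_algebra.
From mathcomp Require Import reals.
Import Order.TTheory GRing.Theory Num.Theory.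
Local Open Scope ring_scope.

Set Implicit Arguments.
Section Aux.
Variable R : realType.

Definition two_out (T : finType) (Q : qbaf R T) (z : T) : bool :=
  [exists w1, exists w2, [&& w1 != w2, edge Q z w1 & edge Q z w2]].

Definition sig : semantics R := fun T Q x =>
  if [exists y, exists z, [&& edge Q y z, edge Q z x, bs Q y == 0 & two_out Q z]]
  then 1 else 0.
Arguments sig : clear implicits.

Lemma sig_ge0 T Q x : 0 <= sig T Q x.
Proof. by rewrite /sig; case: ifP. Qed.

Lemma sig_gradual : gradual sig.
Proof. by move=> T Q _ x; rewrite /sig; case: ifP; rewrite ?lexx ?ler01. Qed.

Lemma edge_restrict T (Q : qbaf R T) S x y :
  edge (restrict Q S) x y = edge Q x y && ((x, y) \in S).
Proof. by rewrite /edge /= andb_orl. Qed.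

Lemma no_loop T (Q : qbaf R T) : acyclic Q -> forall x, ~~ edge Q x x.
Proof. by move=> H x; apply/negP => e; have := H x x e; rewrite connect0. Qed.

Lemma two_out_only T (Q : qbaf R T) b a : only_edge Q b a -> two_out Q b = false.
Proof.
move=> Hb; apply/negbTE/existsPn => w1; apply/existsPn => w2.
apply/negP => /and3P [ne e1 e2].
by move: (Hb w1) (Hb w2) => [h1 _] [h2 _]; rewrite (h1 e1) (h2 e2) eqxx in ne.
Qed.

Lemma two_out_restrict T (Q : qbaf R T) S z : two_out (restrict Q S) z -> two_out Q z.
Proof.
move=> /existsP [w1 /existsP [w2 /and3P [ne e1 e2]]].
apply/existsP; exists w1; apply/existsP; exists w2.
by move: e1 e2; rewrite !edge_restrict => /andP [-> _] /andP [-> _]; rewrite ne.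
Qed.

Lemma mono_restrict T (Q : qbaf R T) a b : acyclic Q -> only_edge Q b a ->
  sig T (restrict Q (edges Q :\ (b, a))) a = sig T Q a.
Proof.
move=> Hac Hb; rewrite /sig; congr (if _ then _ else _).
apply/eq_existsb => y; apply/eq_existsb => z.
have Haa := no_loop Hac a.
case: (eqVneq z b) => [->|nzb].
  case Ht: (two_out (restrict Q _) b); first by move: (two_out_restrict _ _ _ Ht); rewrite (two_out_only Hb).
  by rewrite (two_out_only Hb) !andbF.
have -> : two_out (restrict Q (edges Q :\ (b, a))) z = two_out Q z.
  rewrite /two_out; apply/eq_existsb => w1; apply/eq_existsb => w2.
  rewrite !edge_restrict !in_setD1 !inE !xpair_eqE (negbTE nzb) /=.
  by case: (edge Q z w1); case: (edge Q z w2); rewrite ?andbF.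
rewrite !edge_restrict !in_setD1 !inE !xpair_eqE (negbTE nzb) /=.
case: (eqVneq z a) => [->|nza]; first by rewrite (negbTE Haa) !andbF.
by rewrite andbF /=; case: (edge Q y z); case: (edge Q z a).
Qed.

Lemma mono_bs T (Q : qbaf R T) a b tau' : acyclic Q -> only_edge Q b a ->
  (forall x, x != b -> tau' x = bs Q x) ->
  sig T (with_bs Q tau') a = sig T Q a.
Proof.
move=> Hac Hb Ht; rewrite /sig; congr (if _ then _ else _).
apply/eq_existsb => y; apply/eq_existsb => z.
have Ew : edge (with_bs Q tau') = edge Q by [].
rewrite /two_out Ew /=.
case: (eqVneq y b) => [->|nyb]; last by rewrite Ht.
case E: (edge Q b z) => //=.
have := (Hb z).1 E => ->.
by have := no_loop Hac a => /negbTE ->.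
Qed.

Lemma sig_mono : monotonic_acyclic sig.
Proof.
move=> T Q _ Hac a b _ Hb tau' _.
rewrite (mono_restrict Hac Hb).
split => // _ _ Ht; by rewrite (mono_bs _ Hac Hb Ht).
Qed.

Lemma sig_zero T (Q : qbaf R T) x : (forall y, bs Q y != 0) -> sig T Q x = 0.
Proof.
move=> H; rewrite /sig; case: ifP => // /existsP [y /existsP [z /and4P [_ _ h _]]].
by rewrite (negbTE (H y)) in h.
Qed.

End Aux.

Definition a0 : 'I_4 := @Ordinal 4 0 isT.
Definition c1 : 'I_4 := @Ordinal 4 1 isT.
Definition g2 : 'I_4 := @Ordinal 4 2 isT.
Definition b3 : 'I_4 := @Ordinal 4 3 isT.

Definition Qex (R : realType) : qbaf R 'I_4 :=
  QBAF (fun _ _ => false)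
       (fun x y : 'I_4 => (nat_of_ord x, nat_of_ord y) \in [:: (3,2);(2,0);(2,1);(1,0)]%N)
       (fun _ => 1).

Lemma edge_dec (R : realType) (x y : 'I_4) : edge (Qex R) x y -> (nat_of_ord y < nat_of_ord x)%N.
Proof. by move: x y => [[|[|[|[|?]]]] ?] [[|[|[|[|?]]]] ?]. Qed.

Theorem proposition14 (R : realType) :
  exists sigma : semantics R,
    gradual sigma /\ monotonic_acyclic sigma /\
    exists (T : finType) (Q : qbaf R T),
      valid_qbaf Q /\ acyclic Q /\
      exists (a b g : T) (d : R),
        let r := (b, g) in
        [/\ multifold Q a r, a != b, only_edge Q b r.2,
            0 <= d <= 1 &
            (d < bs Q b /\
               `|RAE sigma (update_bs Q b d) a r| > `|RAE sigma Q a r|)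
            \/
            (d > bs Q b /\
               `|RAE sigma (update_bs Q b d) a r| < `|RAE sigma Q a r|)].
Proof.
exists (@sig R); split; first exact: sig_gradual.
split; first exact: sig_mono.
exists 'I_4, (Qex R); split.
  by split => [x y|x]; rewrite /= ?lexx ?ler01.
split.
  move=> x y e; apply/negP => /connectP [p pth lst].
  have Hd := @edge_dec R.
  suff : (nat_of_ord x <= nat_of_ord y)%N by rewrite leqNgt (Hd _ _ e).
  elim: p y pth lst {e} => [|z p IH] y /=; first by move=> _ ->.
  move=> /andP [e pth] lst; apply: leq_trans (IH _ pth lst) _; exact: ltnW (Hd _ _ e).
have OE : only_edge (Qex R) b3 g2.
  move=> c; split; last by move->.
  by move=> e; apply/val_inj; move: c e => [[|[|[|[|?]]]] ?].
exists a0, b3, g2, 0; split => //.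
- split => //; split => //; split => //.
  by exists [:: a0], [:: c1; a0].
- by rewrite lexx ler01.
left; split; first by rewrite /= ltr01.
have R0 : RAE (sig R) (Qex R) a0 (b3, g2) = 0.
  rewrite /RAE big1 // => S _; rewrite !sig_zero ?subrr ?mulr0 // => y /=;
  exact: (@oner_neq0 R).
rewrite R0 normr0.
set Q' := update_bs (Qex R) b3 0.
have Z : forall S : {set 'I_4 * 'I_4}, S \subset edges Q' :\ (b3,g2) -> sig R (restrict Q' S) a0 = 0.
  move=> S HS; rewrite /sig; case: ifP => // /existsP [y /existsP [z /and4P [e1 _ hb _]]].
  move: hb => /=; case: ifP => [/eqP Ey _| _ h]; last by rewrite oner_eq0 in h.
  move: e1; rewrite Ey; rewrite edge_restrict => /andP [e1 inS].
  have := subsetP HS _ inS; rewrite in_setD1 xpair_eqE eqxx /= => /andP [nz _].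
  by rewrite ((OE z).1 e1) eqxx in nz.
pose S0 : {set 'I_4 * 'I_4} := [set (g2,a0); (g2,c1)].
have HS0 : S0 \subset edges Q' :\ (b3,g2).
  apply/subsetP => e; rewrite !inE => /orP [] /eqP -> //.
have one : sig R (restrict Q' ((b3,g2) |: S0)) a0 = 1.
  rewrite /sig ifT //; apply/existsP; exists b3; apply/existsP; exists g2.
  rewrite !edge_restrict /= eqxx /=.
  rewrite !inE eqxx /=.
  apply/existsP; exists a0; apply/existsP; exists c1; rewrite !edge_restrict !inE.
  by [].
rewrite /RAE (bigD1 S0) //= one (Z S0 HS0) subr0 mulr1.
have wpos : forall k m n : nat, 0 < ((k`! * m`!)%:R / (n`!)%:R :> R).
  by move=> k m n; apply: divr_gt0; rewrite ltr0n ?muln_gt0 !fact_gt0.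
apply: (lt_le_trans _ (ler_norm _)); apply: ltr_wpDr; last exact: wpos.
apply: sumr_ge0 => S /andP [HS _]; apply: mulr_ge0; first exact: ltW (wpos _ _ _).
by rewrite (Z S HS) subr0 sig_ge0.
Qed.
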